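(* Let $(X,d)$ be a compact metric space and let $f_1,f_2:X\to X$ be continuous. Suppose there is a point $c\in X$ with $f_1(x)=c$ for all $x\in X$. If the multiple mapping $F=\{f_1,f_2\}$ is (Hausdorff metric) sensitive, then $f_2$ is sensitive.
   Context: For the multiple mapping $F=\{f_1,f_2\}$ and $n\ge 1$, $F^n(x)=\{f_{i_1}f_{i_2}\cdots f_{i_n}(x)\mid i_1,\dots,i_n\in\{1,2\}\}$, a nonempty compact subset of $X$. The Hausdorff metric on nonempty compact subsets is $d_H(A,B)=\max\{\sup_{a\in A}\inf_{b\in B}d(a,b),\sup_{b\in B}\inf_{a\in A}d(a,b)\}$. $F$ is (Hausdorff metric) sensitive if there is $\delta>0$ such that for every nonempty open $U\subset X$ there exist $x,y\in U$ and $n\in\mathbb{Z}^+$ with $d_H(F^n(x),F^n(y))>\delta$. A continuous map $f:X\to X$ is sensitive if there is $\delta>0$ such that for every nonempty open $U\subset X$ there exist $x,y\in U$ and $n\in\mathbb{Z}^+$ with $d(f^n(x),f^n(y))>\delta$. Here $\mathbb{Z}^+=\{1,2,3,\dots\}$. *)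

(* Defs.v *)
From HB Require Import structures.
From mathcomp Require Import all_boot all_order all_algebra.
From mathcomp Require Import all_classical all_reals all_analysis.
Set Implicit Arguments. Unset Strict Implicit. Unset Printing Implicit Defensive.
Import Order.TTheory GRing.Theory Num.Theory.
Local Open Scope classical_set_scope.
Local Open Scope ring_scope.

Section Defs.
Context {R : realType} {X : metricType R}.

Definition pick_map (f1 f2 : X -> X) (b : bool) : X -> X := if b then f1 else f2.

(* f_{i_1} f_{i_2} ... f_{i_n} (x) for the word w = [:: i_1; ...; i_n] *)
Definition word_apply (f1 f2 : X -> X) (w : seq bool) (x : X) : X :=
  foldr (fun b y => pick_map f1 f2 b y) x w.

Definition Fiter (f1 f2 : X -> X) (n : nat) (x : X) : set X :=
  [set y | exists w : seq bool, size w = n /\ y = word_apply f1 f2 w x].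

Definition hausdorff_dist (A B : set X) : R :=
  Num.max (sup [set inf [set mdist a b | b in B] | a in A])
          (sup [set inf [set mdist a b | a in A] | b in B]).

Definition multi_sensitive (f1 f2 : X -> X) : Prop :=
  exists2 delta : R, 0 < delta &
    forall U : set X, open U -> U !=set0 ->
      exists x y n, [/\ U x, U y, (0 < n)%N &
        hausdorff_dist (Fiter f1 f2 n x) (Fiter f1 f2 n y) > delta].

Definition sensitive (f : X -> X) : Prop :=
  exists2 delta : R, 0 < delta &
    forall U : set X, open U -> U !=set0 ->
      exists x y n, [/\ U x, U y, (0 < n)%N &
        mdist (iter n f x) (iter n f y) > delta].

End Defs.

(* Main.v *)
Require Import Defs.
From HB Require Import structures.
From mathcomp Require Import all_boot all_order all_algebra.
From mathcomp Require Import all_classical all_reals all_analysis.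
Import Order.TTheory GRing.Theory Num.Theory.
Local Open Scope classical_set_scope.
Local Open Scope ring_scope.

Section Aux.
Context (R : realType) (X : metricType R) (f1 f2 : X -> X) (c : X).
Hypothesis f1c : forall x : X, f1 x = c.

Lemma word_dich (w : seq bool) :
  w = nseq (size w) false \/ (forall x y, word_apply f1 f2 w x = word_apply f1 f2 w y).
Proof.
elim: w => [|b w [IH|IH]]; first by left.
- case: b; last by left; rewrite /= -IH.
  by right => x y; rewrite /= !f1c.
- by right => x y; rewrite /= (IH x y).
Qed.

Lemma word_nseq n x : word_apply f1 f2 (nseq n false) x = iter n f2 x.
Proof. by elim: n => //= n ->. Qed.

Lemma Fiter_cases n x y p : Fiter f1 f2 n x p ->
  p = iter n f2 x \/ Fiter f1 f2 n y p.
Proof.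
move=> [w [sw ->]]; case: (word_dich w) => [E|E].
- by left; rewrite E sw word_nseq.
- by right; exists w; split => //; apply: E.
Qed.

Lemma iter_in n x : Fiter f1 f2 n x (iter n f2 x).
Proof. by exists (nseq n false); rewrite size_nseq word_nseq. Qed.

Lemma half_bound n x y (D := mdist (iter n f2 x) (iter n f2 y)) :
  sup [set inf [set mdist a b | b in Fiter f1 f2 n y] | a in Fiter f1 f2 n x] <= D.
Proof.
apply: ge_sup; first by exists (inf [set mdist (iter n f2 x) b | b in Fiter f1 f2 n y]),
  (iter n f2 x) => //; apply: iter_in.
move=> r [a Ha <-].
have lb : has_lbound [set mdist a b | b in Fiter f1 f2 n y].
  by exists 0 => r' [b _ <-]; apply: mdist_ge0.
case: (Fiter_cases n x y a Ha) => [E|Hy].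
- rewrite E in lb *.
  apply: (ge_inf lb); exists (iter n f2 y) => //; apply: iter_in.
- apply: (le_trans (ge_inf lb _)); first by exists a.
  by rewrite mdistxx /D mdist_ge0.
Qed.

End Aux.

Theorem theorem3p2 (R : realType) (X : metricType R) (f1 f2 : X -> X) (c : X) :
  compact [set: X] -> continuous f1 -> continuous f2 ->
  (forall x : X, f1 x = c) ->
  multi_sensitive f1 f2 -> sensitive f2.
Proof.
move=> _ _ _ f1c [d d0 Hs]; exists d => // U oU nU.
have [x [y [n [Ux Uy n0 H]]]] := Hs U oU nU.
exists x, y, n; split => //.
apply: (lt_le_trans H); rewrite /hausdorff_dist ge_max.
apply/andP; split.
  exact: (@half_bound R X f1 f2 c f1c n x y).
have -> : [set inf [set mdist a b | a in Fiter f1 f2 n x] | b in Fiter f1 f2 n y] =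
    [set inf [set mdist b a | a in Fiter f1 f2 n x] | b in Fiter f1 f2 n y].
  apply: eq_imagel => b _; apply: f_equal; apply: eq_imagel => a _.
  exact: metric_sym.
rewrite [leRHS]metric_sym; exact: (@half_bound R X f1 f2 c f1c n y x).
Qed.
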